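(* For every $n\in\mathbb{N}$, there exists a planar graph $G$ on $2n$ vertices, of pathwidth $3$ and maximum degree $5$, such that $\pi_\alpha(G)\ge \log_2(n+1)$.
   Context: A string $s=s_1,\ldots,s_{2k}$ (of even length) is an anagram if $s_1,\ldots,s_k$ is a permutation of $s_{k+1},\ldots,s_{2k}$. For a graph $G$, a colouring $\varphi:V(G)\to\{1,\ldots,c\}$ is anagram-free if for every path $v_1,v_2,\ldots,v_{2k}$ in $G$ with an even number $2k\ge 2$ of vertices (i.e., an odd number of edges), the string $\varphi(v_1),\ldots,\varphi(v_{2k})$ is not an anagram. The anagram-free chromatic number $\pi_\alpha(G)$ is the smallest $c$ such that $G$ has an anagram-free colouring with $c$ colours. *)

(* Defs.v *)
From Stdlib Require Import Reals.
From mathcomp Require Import all_boot.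

Set Implicit Arguments.
Unset Strict Implicit.
Unset Printing Implicit Defensive.

Definition simple_graph (T : finType) (e : rel T) : Prop :=
  symmetric e /\ irreflexive e.

Definition is_gpath (T : finType) (e : rel T) (p : seq T) : bool :=
  match p with
  | [::] => false
  | x :: q => path e x q && uniq p
  end.

Definition anagram (X : eqType) (s : seq X) : bool :=
  ~~ odd (size s) &&
  perm_eq (take (size s)./2 s) (drop (size s)./2 s).

Definition anagram_free (T : finType) (e : rel T) (c : nat) (f : T -> 'I_c)
  : Prop :=
  forall p : seq T, is_gpath e p -> ~~ odd (size p) -> ~~ anagram (map f p).

(* pi_alpha(G) >= x : the anagram-free chromatic number (the least c such that
   an anagram-free c-colouring exists) is at least x, i.e. every c admitting an
   anagram-free c-colouring satisfies x <= c. *)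
Definition anagram_chromatic_ge (T : finType) (e : rel T) (x : R) : Prop :=
  forall c : nat, (exists f : T -> 'I_c, anagram_free e f) -> Rle x (INR c).

Definition log2 (x : R) : R := Rdiv (ln x) (ln 2).

Definition max_degree_le (T : finType) (e : rel T) (d : nat) : Prop :=
  forall x : T, #|[set y | e x y]| <= d.

Definition path_decomposition (T : finType) (e : rel T) (B : seq {set T})
  : Prop :=
  (forall x : T, exists2 b, b \in B & x \in b) /\
  (forall x y : T, e x y -> exists2 b, b \in B & (x \in b) && (y \in b)) /\
  (forall (x : T) (i j k : nat), i <= j -> j <= k -> k < size B ->
     x \in nth set0 B i -> x \in nth set0 B k -> x \in nth set0 B j).

(* width = (max bag size) - 1; pathwidth <= w iff some path decomposition has
   all bags of size at most w + 1. *)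
Definition pathwidth_le (T : finType) (e : rel T) (w : nat) : Prop :=
  exists B : seq {set T}, path_decomposition e B /\
    (forall b, b \in B -> #|b| <= w.+1).

Definition pt := (R * R)%type.

Definition continuous_curve (g : R -> pt) : Prop :=
  forall t : R, continuity_pt (fun s => fst (g s)) t /\
                continuity_pt (fun s => snd (g s)) t.

Definition in_open01 (t : R) : Prop := Rlt 0 t /\ Rlt t 1.
Definition in_closed01 (t : R) : Prop := Rle 0 t /\ Rle t 1.

(* A planar drawing: vertices are distinct points of the plane, each edge xy
   is a simple (injective on [0,1]) continuous arc from pos x to pos y whose
   interior avoids all vertex points, and the interiors of arcs of distinct
   edges are disjoint.  (An arc is given for each ordered adjacent pair; arcs
   of the same edge in both orientations are not required to be related.) *)
Definition planar (T : finType) (e : rel T) : Prop :=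
  exists (pos : T -> pt) (arc : T -> T -> R -> pt),
    injective pos /\
    (forall x y : T, e x y ->
       continuous_curve (arc x y) /\
       arc x y R0 = pos x /\ arc x y R1 = pos y /\
       (forall s t, in_closed01 s -> in_closed01 t ->
          arc x y s = arc x y t -> s = t) /\
       (forall t z, in_open01 t -> arc x y t <> pos z)) /\
    (forall x y u v : T, e x y -> e u v ->
       ~ ((x = u /\ y = v) \/ (x = v /\ y = u)) ->
       forall s t, in_open01 s -> in_open01 t -> arc x y s <> arc u v t).

(* Main.v *)
Require Import Defs.
From Stdlib Require Import Reals Lra Psatz Classical.
From mathcomp Require Import all_boot zify.
Set Implicit Arguments. Unset Strict Implicit.

Definition TT n := ('I_n * bool)%type.
Definition ee n : rel (TT n) := fun x y => (x != y) && (x.1 <= y.1.+1) && (y.1 <= x.1.+1).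

Section Euler.
Variable X : eqType.
Implicit Types s t : seq (X * X).

Definition flipeq (p q : X * X) := (q == p) || (q == (p.2, p.1)).
Definition outc s a := count (fun p : X * X => p.1 == a) s.
Definition inc s a := count (fun p : X * X => p.2 == a) s.
Definition Good s := forall a, outc s a <= (inc s a).+1 /\ inc s a <= (outc s a).+1.

Lemma all2_catl s1 s2 t : all2 flipeq (s1 ++ s2) t ->
  exists t1 t2, t = t1 ++ t2 /\ all2 flipeq s1 t1 /\ all2 flipeq s2 t2.
Proof.
elim: s1 t => [|p s1 IH] [|q t] //=.
- by move=> H; exists [::], [::].
- by move=> H; exists [::], (q :: t).
- case/andP=> Hpq /IH [t1 [t2 [-> [H1 H2]]]].
  by exists (q :: t1), t2; rewrite /= Hpq H1 H2.
Qed.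

Lemma all2_cat2 s1 s2 t1 t2 : all2 flipeq s1 t1 -> all2 flipeq s2 t2 ->
  all2 flipeq (s1 ++ s2) (t1 ++ t2).
Proof.
elim: s1 t1 => [|p s1 IH] [|q t1] //= /andP[-> H1] H2.
exact: IH.
Qed.

Lemma all2_refl s : all2 flipeq s s.
Proof. by elim: s => //= p s ->; rewrite /flipeq eqxx. Qed.

Lemma deg_flip s t a : all2 flipeq s t -> outc t a + inc t a = outc s a + inc s a.
Proof.
rewrite /outc /inc.
elim: s t => [|p s IH] [|q t] //= /andP[Hpq /IH]; case/orP: Hpq => /eqP -> /=; lia.
Qed.

Lemma has_split s a : 0 < outc s a + inc s a ->
  exists s2 q s3, s = s2 ++ q :: s3 /\ ((q.1 == a) || (q.2 == a)).
Proof.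
move=> H.
have : has (fun q : X * X => (q.1 == a) || (q.2 == a)) s.
  rewrite has_count; move: H; rewrite /outc /inc.
  elim: s => //= q s IH; case: (q.1 == a); case: (q.2 == a) => /=; lia.
case/hasP=> q Hq Hqa; case/splitPr: Hq => s2 s3.
by exists s2, q, s3.
Qed.

Lemma decomp s a : 2 <= outc s a + inc s a ->
  (exists s1 s2, s = s1 ++ (a, a) :: s2) \/
  (exists s1 p s2 q s3, s = s1 ++ p :: s2 ++ q :: s3 /\
     ((p.1 == a) || (p.2 == a)) /\ ((q.1 == a) || (q.2 == a))).
Proof.
elim: s => [|p s IH] //=.
rewrite /outc /inc /=.
case E1: (p.1 == a); case E2: (p.2 == a) => /= H.
- left; exists [::], s; rewrite /=; congr (_ :: _).
  by case: p E1 E2 => p1 p2 /= /eqP -> /eqP ->.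
- right; have [s2 [q [s3 [-> Hq]]]] := has_split (s := s) (a := a) ltac:(rewrite /outc /inc; lia).
  by exists [::], p, s2, q, s3; rewrite E1 Hq.
- right; have [s2 [q [s3 [-> Hq]]]] := has_split (s := s) (a := a) ltac:(rewrite /outc /inc; lia).
  by exists [::], p, s2, q, s3; rewrite E1 E2 Hq.
- case: (IH ltac:(rewrite /outc /inc; lia)).
  + by move=> [s1 [s2 ->]]; left; exists (p :: s1), s2.
  + by move=> [s1 [p' [s2 [q [s3 [-> HH]]]]]]; right; exists (p :: s1), p', s2, q, s3.
Qed.

Lemma flipA (p : X * X) a : (p.1 == a) || (p.2 == a) ->
  flipeq p ((if p.2 == a then p.1 else p.2), a).
Proof.
rewrite /flipeq; case: p => p1 p2 /=.
case E2: (p2 == a); first by move/eqP: E2 => ->; rewrite eqxx.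
by rewrite orbF => /eqP ->; rewrite eqxx orbT.
Qed.

Lemma flipB (q : X * X) a : (q.1 == a) || (q.2 == a) ->
  flipeq q (a, (if q.1 == a then q.2 else q.1)).
Proof.
rewrite /flipeq; case: q => q1 q2 /=.
case E1: (q1 == a); first by move/eqP: E1 => ->; rewrite eqxx.
by rewrite /= => /eqP ->; rewrite eqxx orbT.
Qed.

Lemma flipswap (p : X * X) u v : flipeq p (u, v) -> flipeq p (v, u).
Proof.
rewrite /flipeq; case: p => p1 p2 /=.
by case/orP => /eqP [-> ->]; rewrite eqxx ?orbT.
Qed.

Lemma euler_aux N s : size s <= N -> exists t, all2 flipeq s t /\ Good t.
Proof.
elim: N s => [|N IH] s Hs.
  by case: s Hs => // _; exists [::]; split => // a; rewrite /outc /inc.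
case: (classic (exists a, 2 <= outc s a + inc s a)) => [[a Ha]|Hn]; last first.
  exists s; split; first exact: all2_refl.
  move=> a; have : ~ (2 <= outc s a + inc s a) by move=> H; apply: Hn; exists a.
  lia.
case: (decomp Ha).
- move=> [s1 [s2 E]].
  have [t [Ht Gt]] := IH (s1 ++ s2) ltac:(move: Hs; rewrite E !size_cat /=; lia).
  have [t1 [t2 [Et [H1 H2]]]] := all2_catl Ht.
  exists (t1 ++ (a, a) :: t2); split.
    by rewrite E; apply: all2_cat2 => //=; rewrite /flipeq eqxx.
  move=> b; have := Gt b; clear -Et; rewrite Et /outc /inc !count_cat /=.
  case: (a == b); lia.
- move=> [s1 [p [s2 [q [s3 [E [Hp Hq]]]]]]].
  have Hpf := flipA Hp; have Hqf := flipB Hq.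
  move: (if p.2 == a then p.1 else p.2) (if q.1 == a then q.2 else q.1) Hpf Hqf => x y Hpf Hqf.
  have [t [Ht Gt]] := IH (s1 ++ (x, y) :: s2 ++ s3)
     ltac:(move: Hs; rewrite E !size_cat /= !size_cat /=; lia).
  have [t1 [t' [Et [H1 H']]]] := all2_catl Ht.
  case: t' Et H' => [|r t'] // Et /andP [Hr H'].
  have [t2 [t3 [Et' [H2 H3]]]] := all2_catl H'.
  subst t t'.
  have Hpf' : flipeq p (a, x) by exact: flipswap.
  have Hqf' : flipeq q (y, a) by exact: flipswap.
  case/orP: Hr => /eqP Er.
  + exists (t1 ++ (x, a) :: t2 ++ (a, y) :: t3); split.
      rewrite E; apply: all2_cat2 => //=; rewrite Hpf; apply: all2_cat2 => //=.
      by rewrite Hqf.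
    move=> b; have := Gt b; clear -Er; rewrite Er /outc /inc !count_cat /= !count_cat /=.
    case: (x == b); case: (y == b); case: (a == b); lia.
  + exists (t1 ++ (a, x) :: t2 ++ (y, a) :: t3); split.
      rewrite E; apply: all2_cat2 => //=; rewrite Hpf'; apply: all2_cat2 => //=.
      by rewrite Hqf'.
    move=> b; have := Gt b; clear -Er; rewrite Er /outc /inc !count_cat /= !count_cat /=.
    case: (x == b); case: (y == b); case: (a == b); lia.
Qed.

Lemma euler s : (forall a, ~~ odd (outc s a + inc s a)) ->
  exists t, all2 flipeq s t /\ forall a, outc t a = inc t a.
Proof.
move=> Hev; have [t [Ht Gt]] := euler_aux (leqnn (size s)).
exists t; split => // a.
have := Hev a; rewrite -(deg_flip a Ht); have := Gt a.
move: (outc t a) (inc t a) => o i [H1 H2].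
have : o = i \/ o = i.+1 \/ i = o.+1 by lia.
case=> [//|[->|->]]; by rewrite ?addSn ?addnS addnn /= odd_double.
Qed.
End Euler.

Section G.
Variable n : nat.
Local Notation TT := (TT n).
Local Notation ee := (@ee n).

Lemma card_TT : #|{: TT}| = (2 * n)%N.
Proof. by rewrite card_prod card_ord card_bool mulnC. Qed.

Lemma ee_simple : simple_graph ee.
Proof.
split.
- move=> x y; rewrite /ee eq_sym; apply/idP/idP => /andP[/andP[-> ->] ->] //.
- by move=> x; rewrite /ee eqxx.
Qed.

Lemma ee_nat (x y : TT) : ee x y ->
  [/\ (x.1 <= y.1.+1), (y.1 <= x.1.+1) & ((x.1 : nat) <> y.1 \/ x.2 <> y.2)].
Proof.
case: x y => [x1 x2] [y1 y2]; rewrite /ee /= => /andP[/andP[Hne H1] H2]; split => //.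
case: (eqVneq (x1 : nat) y1) => [E|]; last by move/eqP => H; left.
right => E2; move: Hne; rewrite E2.
have E1 : x1 = y1 by apply: val_inj.
by rewrite E1 eqxx.
Qed.

Lemma ee_deg : max_degree_le ee 5.
Proof.
move=> x.
pose S := [set y : TT | (x.1 <= y.1.+1) && (y.1 <= x.1.+1)].
have HxS : x \in S by rewrite inE leqnSn.
have sub : [set y | ee x y] \subset S :\ x.
  apply/subsetP => y; rewrite !inE /ee => /andP[/andP[Hne H1] H2].
  by rewrite eq_sym Hne H1 H2.
apply: leq_trans (subset_leq_card sub) _.
have : #|S| <= 6.
  pose g := fun y : TT => ((inord (y.1 + 1 - x.1) : 'I_3), y.2).
  have ginj : {in S &, injective g}.
    move=> [y1 y2] [z1 z2]; rewrite !inE /g /= => /andP[Hy1 Hy2] /andP[Hz1 Hz2] [E1 ->].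
have := congr1 (@nat_of_ord 3) E1; rewrite !inordK; try lia.
    move=> E; congr pair; apply: val_inj => /=; lia.
  rewrite -(card_in_imset ginj).
  apply: leq_trans (max_card _) _.
  by rewrite card_prod card_ord card_bool.
have E : #|S| = (#|S :\ x|).+1 by rewrite (cardsD1 x S) HxS.
rewrite E; lia.
Qed.

Definition bag (i : nat) : {set TT} := [set x : TT | (x.1 == i :> nat) || (x.1 == i.+1 :> nat)].

Lemma ee_pw : pathwidth_le ee 3.
Proof.
exists [seq bag i | i <- iota 0 n]; split; last first.
  move=> b /mapP [i _ ->].
  pose g := fun y : TT => ((y.1 == i.+1 :> nat), y.2).
  have ginj : {in bag i &, injective g}.
    move=> [y1 y2] [z1 z2]; rewrite !inE /g /= => Hy Hz [E1 ->].
    congr pair; apply: val_inj => /=; move: Hy Hz E1.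
    case/orP => /eqP ->; case/orP => /eqP ->; rewrite ?eqxx //; lia.
  rewrite -(card_in_imset ginj).
  apply: leq_trans (max_card _) _.
  by rewrite card_prod card_bool.
split; [|split].
- move=> x; exists (bag x.1); first by apply: map_f; rewrite mem_iota /=.
  by rewrite inE eqxx.
- move=> x y /ee_nat [H1 H2 _]; exists (bag (minn x.1 y.1)).
    apply: map_f; rewrite mem_iota /= add0n.
    by apply: leq_ltn_trans (geq_minl _ _) (ltn_ord _).
  rewrite !inE; move: H1 H2; move: (nat_of_ord x.1) (nat_of_ord y.1) => a b H1 H2.
  have [E|E] : a <= b \/ b < a by lia.
  - rewrite (minn_idPl E); case: (eqVneq b a) => [->|N]; first by rewrite eqxx.
    have -> : b = a.+1 by lia.
    by rewrite !eqxx orbT.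
  - rewrite (minn_idPr (ltnW E)); have -> : a = b.+1 by lia.
    by rewrite !eqxx orbT.
- move=> x i j k Hij Hjk; rewrite size_map size_iota => Hk.
  rewrite !(nth_map 0) ?size_iota; try lia.
  rewrite !nth_iota; try lia.
  rewrite !inE !add0n; move=> /orP[] /eqP H1 /orP[] /eqP H2; apply/orP; lia.
Qed.
End G.

Lemma nonint_nat (n x1 y1 u1 v1 : nat) (x2 y2 u2 v2 : bool) :
  x1 < n -> y1 < n -> u1 < n -> v1 < n ->
  x1 <= y1.+1 -> y1 <= x1.+1 -> (x1 <> y1 \/ x2 <> y2) ->
  u1 <= v1.+1 -> v1 <= u1.+1 -> (u1 <> v1 \/ u2 <> v2) ->
  let P k (b : bool) := if b then k else (2 * n - 1 - k) in
  let pg a (ab : bool) b (bb : bool) := (ab && ~~ bb && (a == b.+1)) || (bb && ~~ ab && (b == a.+1)) in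
  pg x1 x2 y1 y2 = pg u1 u2 v1 v2 ->
  let a := minn (P x1 x2) (P y1 y2) in let b := maxn (P x1 x2) (P y1 y2) in
  let c := minn (P u1 u2) (P v1 v2) in let d := maxn (P u1 u2) (P v1 v2) in
  b <= c \/ d <= a \/ (a <= c /\ d <= b) \/ (c <= a /\ b <= d).
Proof.
move=> H1 H2 H3 H4 H5 H6 H7 H8 H9 H10 P pg Hpg a b c d; subst P pg a b c d.
move: H7 H10 Hpg; case: x2; case: y2; case: u2; case: v2 => /= H7 H10 Hpg; lia.
Qed.

Section Pl.
Variable n : nat.
Local Notation TT := (TT n).
Local Notation ee := (@ee n).
Section RL.
Local Open Scope R_scope.
Lemma real_nest (lo1 hi1 lo2 hi2 X : R) : lo1 < X < hi1 -> lo2 < X < hi2 ->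
  (X-lo1)*(hi1-X) = (X-lo2)*(hi2-X) ->
  (hi1 <= lo2 \/ hi2 <= lo1 \/ (lo1 <= lo2 /\ hi2 <= hi1) \/ (lo2 <= lo1 /\ hi1 <= hi2)) ->
  lo1 = lo2 /\ hi1 = hi2.
Proof.
intros H1 H2 E [H|[H|[[Ha Hb]|[Ha Hb]]]]; try lra.
- assert (Id : (X-lo1)*(hi1-X) - (X-lo2)*(hi2-X) = (lo2-lo1)*(hi1-X) + (X-lo2)*(hi1-hi2)) by ring.
  assert (A : 0 <= (lo2-lo1)*(hi1-X)) by (apply Rmult_le_pos; lra).
  assert (B : 0 <= (X-lo2)*(hi1-hi2)) by (apply Rmult_le_pos; lra).
  assert (A0 : (lo2-lo1)*(hi1-X) = 0) by lra.
  assert (B0 : (X-lo2)*(hi1-hi2) = 0) by lra.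
  apply Rmult_integral in A0; apply Rmult_integral in B0; lra.
- assert (Id : (X-lo2)*(hi2-X) - (X-lo1)*(hi1-X) = (lo1-lo2)*(hi2-X) + (X-lo1)*(hi2-hi1)) by ring.
  assert (A : 0 <= (lo1-lo2)*(hi2-X)) by (apply Rmult_le_pos; lra).
  assert (B : 0 <= (X-lo1)*(hi2-hi1)) by (apply Rmult_le_pos; lra).
  assert (A0 : (lo1-lo2)*(hi2-X) = 0) by lra.
  assert (B0 : (X-lo1)*(hi2-hi1) = 0) by lra.
  apply Rmult_integral in A0; apply Rmult_integral in B0; lra.
Qed.

Lemma seg (p q s : R) : p <> q -> 0 < s < 1 ->
  Rmin p q < p + (q-p)*s < Rmax p q /\
  (p + (q-p)*s - p)*(q - (p + (q-p)*s)) = (p + (q-p)*s - Rmin p q)*(Rmax p q - (p + (q-p)*s)).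
Proof.
intros Hpq Hs. unfold Rmin, Rmax. destruct (Rle_dec p q).
- assert (0 < (q-p)*s) by (apply Rmult_lt_0_compat; lra).
  assert ((q-p)*s < q - p) by nra.
  split; [lra| ring].
- assert (0 < (p-q)*s) by (apply Rmult_lt_0_compat; lra).
  assert ((p-q)*s < p - q) by nra.
  split; [nra| ring].
Qed.

Lemma pos_sq (D s : R) : D <> 0 -> 0 < s < 1 -> 0 < D*D*s*(1-s).
Proof.
intros HD Hs. assert (0 < D*D) by nra.
assert (0 < s*(1-s)) by nra. nra.
Qed.
End RL.

Definition PP (x : TT) : nat := if x.2 then (x.1 : nat) else (2 * n - 1 - x.1).
Definition pg (x y : TT) : bool :=
  (x.2 && ~~ y.2 && (x.1 == (y.1).+1 :> nat)) || (y.2 && ~~ x.2 && (y.1 == (x.1).+1 :> nat)).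
Lemma PP_inj (x y : TT) : PP x = PP y -> x = y.
Proof.
case: x y => [x1 x2] [y1 y2]; rewrite /PP /=.
have := ltn_ord x1; have := ltn_ord y1.
case: x2; case: y2 => /= Hy Hx E; try lia; congr pair; apply: val_inj => /=; lia.
Qed.

Lemma INR_min a b : INR (minn a b) = Rmin (INR a) (INR b).
Proof.
case: (leqP a b) => H.
- rewrite Rmin_left //; apply: le_INR; lia.
- rewrite Rmin_right //; apply: le_INR; lia.
Qed.
Lemma INR_max a b : INR (maxn a b) = Rmax (INR a) (INR b).
Proof.
case: (leqP a b) => H.
- rewrite Rmax_right //; apply: le_INR; lia.
- rewrite Rmax_left //; apply: le_INR; lia.
Qed.

Local Open Scope R_scope.
Definition ppos (x : TT) : pt := (INR (PP x), 0).
Definition arc (x y : TT) (t : R) : pt :=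
  let px := INR (PP x) in let py := INR (PP y) in
  ((px + (py - px) * t), ((if pg x y then -1 else 1) * ((py - px) * (py - px) * t * (1 - t)))).

Lemma PP_ne (x y : TT) : ee x y -> INR (PP x) <> INR (PP y).
Proof.
move=> /ee_nat [_ _ H] /INR_eq /PP_inj E; subst y.
by case: H.
Qed.

Lemma ee_planar : planar ee.
Proof.
exists ppos, arc; split; [|split].
- by move=> x y [] /INR_eq /PP_inj.
- move=> x y Hxy; have Hne := PP_ne Hxy.
  split; [|split; [|split; [|split]]].
  + move=> t; rewrite /arc /=; split; reg.
  + rewrite /arc /ppos /=; f_equal; ring.
  + rewrite /arc /ppos /=; f_equal; ring.
  + move=> s t _ _; rewrite /arc => [[E _]].
    apply: (Rmult_eq_reg_l (INR (PP y) - INR (PP x))); first lra.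
    intro; apply: Hne; lra.
  + move=> t z Ht; rewrite /arc /ppos => [[_ E]].
    have := @pos_sq (INR (PP y) - INR (PP x)) t ltac:(intro; apply: Hne; lra) Ht.
    case: (pg x y) E => E; lra.
- move=> x y u v Hxy Huv Hdiff s t Hs Ht.
  rewrite /arc => [[E1 E2]].
  have Hne1 := PP_ne Hxy; have Hne2 := PP_ne Huv.
  have P1 := @pos_sq (INR (PP y) - INR (PP x)) s ltac:(intro; apply: Hne1; lra) Hs.
  have P2 := @pos_sq (INR (PP v) - INR (PP u)) t ltac:(intro; apply: Hne2; lra) Ht.
  have Hpg : pg x y = pg u v.
    by case: (pg x y) E2; case: (pg u v) => E2 //; lra.
  have Eq : (INR (PP y) - INR (PP x)) * (INR (PP y) - INR (PP x)) * s * (1 - s) =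
        (INR (PP v) - INR (PP u)) * (INR (PP v) - INR (PP u)) * t * (1 - t).
    by move: E2; rewrite Hpg; case: (pg u v) => E2; lra.
  have [S1 S1e] := seg Hne1 Hs; have [S2 S2e] := seg Hne2 Ht.
  rewrite E1 in S1 S1e.
  have [Hlo Hhi] : Rmin (INR (PP x)) (INR (PP y)) = Rmin (INR (PP u)) (INR (PP v)) /\
                        Rmax (INR (PP x)) (INR (PP y)) = Rmax (INR (PP u)) (INR (PP v)).
    apply: real_nest S1 S2 _ _.
      rewrite -S1e -S2e.
      have A : forall X, X = INR (PP x) + (INR (PP y) - INR (PP x)) * s ->
        (X - INR (PP x)) * (INR (PP y) - X) = (INR (PP y) - INR (PP x)) * (INR (PP y) - INR (PP x)) * s * (1 - s).
        by move=> X ->; ring.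
      have B : forall X, X = INR (PP u) + (INR (PP v) - INR (PP u)) * t ->
        (X - INR (PP u)) * (INR (PP v) - X) = (INR (PP v) - INR (PP u)) * (INR (PP v) - INR (PP u)) * t * (1 - t).
        by move=> X ->; ring.
      by rewrite (A _ (esym E1)) (B _ erefl).
    rewrite -!INR_min -!INR_max.
    case: x y u v Hxy Huv Hpg {Hdiff E1 E2 S1e S2e Eq Hne1 Hne2 P1 P2}
         => [x1 x2] [y1 y2] [u1 u2] [v1 v2] /ee_nat [Ha Hb Hc] /ee_nat [Hd He Hf] Hpg.
    have := @nonint_nat n x1 y1 u1 v1 x2 y2 u2 v2 (ltn_ord _) (ltn_ord _) (ltn_ord _) (ltn_ord _)
                 Ha Hb Hc Hd He Hf Hpg.
    rewrite /PP /=.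
    move=> [H|[H|[[H H']|[H H']]]].
    - by left; apply: le_INR; apply/leP.
    - by right; left; apply: le_INR; apply/leP.
    - by right; right; left; split; apply: le_INR; apply/leP.
    - by right; right; right; split; apply: le_INR; apply/leP.
  apply: Hdiff.
  move: Hlo Hhi; rewrite /Rmin /Rmax.
  case: (Rle_dec _ _) => H1; case: (Rle_dec _ _) => H2 Hlo Hhi.
  all: first [ left; split; apply: PP_inj; apply: INR_eq; lra
             | right; split; apply: PP_inj; apply: INR_eq; lra
             | lra ].
Qed.
End Pl.

Lemma all2_nth (X : eqType) (r : rel X) (s t : seq X) d : all2 r s t ->
  size t = size s /\ forall k, k < size s -> r (nth d s k) (nth d t k).
Proof.
elim: s t => [|x s IH] [|y t] //= /andP[Hxy /IH [Hs H]]; split; first by rewrite Hs.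
by case=> [|k] //= /H.
Qed.

Lemma path_nat (T : Type) (e : rel T) (g : nat -> T) N :
  (forall r, r.+1 < N.+1 -> e (g r) (g r.+1)) -> path e (g 0) (map g (iota 1 N)).
Proof.
move=> H; apply/(pathP (g 0)) => k; rewrite size_map size_iota => Hk.
rewrite (nth_map 0) ?size_iota // nth_iota //.
case: k Hk => [|k] Hk /=; first by apply: H.
rewrite (nth_map 0) ?size_iota; last by lia.
rewrite nth_iota; last by lia.
rewrite !add1n; apply: H; lia.
Qed.

Section Lower.
Variable m c : nat.
Variable f : TT m.+1 -> 'I_c.
Hypothesis Haf : anagram_free (@ee m.+1) f.

Definition vx (k : nat) (b : bool) : TT m.+1 := (inord k, b).
Lemma vx1 k b : k < m.+1 -> ((vx k b).1 : nat) = k.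
Proof. by move=> H; rewrite /vx /= inordK. Qed.

Definition cntI i len (a : 'I_c) :=
  count (fun l => f (vx l true) == a) (iota i len) + count (fun l => f (vx l false) == a) (iota i len).

Lemma interval i len : 0 < len -> i + len <= m.+1 -> (forall a, ~~ odd (cntI i len a)) -> False.
Proof.
move=> Hlen Hil Hev.
pose h r := (f (vx (i + r) true), f (vx (i + r) false)).
pose s := map h (iota 0 len).
have Hs : forall a, ~~ odd (outc s a + inc s a).
  move=> a; have := Hev a; rewrite /cntI /outc /inc /s !count_map.
  have -> : iota i len = map (addn i) (iota 0 len) by rewrite -(addn0 i) iotaDl addn0.
  by rewrite !count_map.
have [t [Hst Hbal]] := euler Hs.
have [Hsz Hnth] := all2_nth (h 0) Hst.
have Hszs : size s = len by rewrite /s size_map size_iota.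
pose bt r := nth (h 0) t r == h r.
pose gout r := vx (i + r) (bt r).
pose gback r := vx (i + r) (~~ bt r).
have Cout : forall r, r < len -> f (gout r) = (nth (h 0) t r).1.
  move=> r Hr; have := Hnth r; rewrite Hszs /s (nth_map 0) ?size_iota // nth_iota // add0n => /(_ Hr).
  rewrite /gout /bt /flipeq; case/orP => /eqP ->; rewrite ?eqxx //.
  by case: eqP => //= -[->].
have Cback : forall r, r < len -> f (gback r) = (nth (h 0) t r).2.
  move=> r Hr; have := Hnth r; rewrite Hszs /s (nth_map 0) ?size_iota // nth_iota // add0n => /(_ Hr).
  rewrite /gback /bt /flipeq; case/orP => /eqP ->; rewrite ?eqxx //.
  by case: eqP => //= -[->].
pose g r := if r < len then gout r else gback (len + len - 1 - r).
pose p := map g (iota 0 (len + len)).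
have Hg1 : forall r, r < len + len -> ((g r).1 : nat) = if r < len then i + r else i + (len + len - 1 - r).
  move=> r Hr; rewrite /g /gout /gback; case: ifP => Hr'; rewrite vx1 //; lia.
have Hg2 : forall r, r < len + len -> (g r).2 = if r < len then bt r else ~~ bt (len + len - 1 - r).
  by move=> r Hr; rewrite /g /gout /gback; case: ifP.
have Hp : p = g 0 :: map g (iota 1 (len + len - 1)).
  rewrite /p; case E: (len + len) => [|N]; [lia | by rewrite subn1].
have Hpath : is_gpath (@ee m.+1) p.
  rewrite /is_gpath Hp; apply/andP; split.
    apply: path_nat => r Hr.
    have Hr1 : r.+1 < len + len by lia.
    have Hr0 : r < len + len by lia.
    rewrite /ee; have := Hg1 r Hr0; have := Hg1 r.+1 Hr1; have := Hg2 r Hr0; have := Hg2 r.+1 Hr1.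
    case: (g r) (g r.+1) => [x1 x2] [y1 y2] /= -> -> Ey Ex.
    apply/andP; split; [apply/andP; split|].
    - apply/negP => /eqP [Ee1 Ee2]; move: Ee2.
      have := congr1 (@nat_of_ord _) Ee1; rewrite /= Ex Ey.
      case: ltnP => H1; case: ltnP => H2 //; try lia.
      move=> _; have -> : len + len - 1 - r.+1 = r by lia.
      by case: (bt r).
    - rewrite Ex Ey; case: ltnP => H1; case: ltnP => H2; lia.
    - rewrite Ex Ey; case: ltnP => H1; case: ltnP => H2; lia.
  rewrite -Hp /p map_inj_in_uniq ?iota_uniq //.
  move=> r r'; rewrite !mem_iota !add0n => /andP[_ Hr] /andP[_ Hr'] Eg.
  have := congr1 (fun x : TT m.+1 => (x.1 : nat)) Eg; rewrite /= Hg1 // Hg1 //.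
  have := congr1 snd Eg; rewrite /= Hg2 // Hg2 //.
  case: ltnP => H1; case: ltnP => H2 //; try lia.
  - move=> Eb Ec; have E' : r = len + len - 1 - r' by lia.
    by move: Eb; rewrite -E'; case: (bt r).
  - move=> Eb Ec; have E' : r' = len + len - 1 - r by lia.
    by move: Eb; rewrite -E'; case: (bt r').
have Hsize : size p = len + len by rewrite /p size_map size_iota.
have := Haf Hpath; rewrite Hsize addnn odd_double => /(_ isT).
rewrite /anagram size_map Hsize addnn odd_double /= half_double.

rewrite /p -!map_take -!map_drop take_iota drop_iota.
rewrite (_ : minn len (len + len) = len); last by lia.
rewrite (_ : len + len - len = len); last by lia.
rewrite add0n.
have E1 : map f (map g (iota 0 len)) = map fst t.
  apply: (@eq_from_nth _ (f (g 0))); rewrite !size_map ?size_iota ?Hsz ?Hszs // => k Hk.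
  rewrite (nth_map (g 0)) ?size_map ?size_iota // (nth_map 0) ?size_iota // nth_iota //.
  rewrite (nth_map (h 0)) ?Hsz ?Hszs // add0n /g Hk; exact: Cout.
have E2 : perm_eq (map f (map g (iota len len))) (map snd t).
  have -> : map snd t = map f (map gback (iota 0 len)).
    apply: (@eq_from_nth _ (h 0).2); rewrite !size_map ?size_iota ?Hsz ?Hszs // => k Hk.
    rewrite (nth_map (h 0)) ?Hsz ?Hszs // (nth_map (gback 0)) ?size_map ?size_iota //.
    by rewrite (nth_map 0) ?size_iota // nth_iota // add0n Cback.
  rewrite -!map_comp.
  have -> : map (f \o g) (iota len len) = map (f \o gback) (map (fun r => len + len - 1 - r) (iota len len)).
    rewrite -map_comp; apply/eq_in_map => r; rewrite mem_iota => /andP[H1 H2] /=.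
    by rewrite /g ltnNge H1.
  apply: perm_map; apply: uniq_perm.
  - rewrite map_inj_in_uniq ?iota_uniq //.
    move=> a b; rewrite !mem_iota => /andP[Ha Ha'] /andP[Hb Hb'] H; lia.
  - exact: iota_uniq.
  - move=> r; rewrite mem_iota add0n; apply/mapP/idP.
    + by move=> [r' Hr' ->]; move: Hr'; rewrite mem_iota; lia.
    + move=> Hr; exists (len + len - 1 - r); first by rewrite mem_iota; lia.
      lia.
rewrite E1; move/negP; apply.
apply: (@perm_trans _ (map snd t)); last by rewrite perm_sym.
apply/allP => a _ /=; rewrite !count_map; apply/eqP; exact: Hbal a.
Qed.

Lemma cnt_split x y a : x <= y -> cntI 0 y a = cntI 0 x a + cntI x (y - x) a.
Proof.
move=> H; rewrite /cntI.
have -> : iota 0 y = iota 0 x ++ iota x (y - x) by rewrite -{1}(subnKC H) iotaD.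
rewrite !count_cat; lia.
Qed.

Lemma lower : m.+2 <= 2 ^ c.
Proof.
pose Pv (k : 'I_m.+2) : {ffun 'I_c -> bool} := [ffun a => odd (cntI 0 k a)].
have Hinj : injective Pv.
  have key : forall x y : 'I_m.+2, x < y -> Pv x = Pv y -> False.
    move=> x y Hxy E; apply: (@interval x (y - x)); try lia.
      have := ltn_ord y; lia.
    move=> a; have := congr1 (fun F : {ffun 'I_c -> bool} => F a) E; rewrite /Pv !ffunE.
    rewrite (@cnt_split x y a (ltnW Hxy)) oddD.
    by case: (odd (cntI 0 x a)); case: (odd (cntI x (y - x) a)).
  move=> x y E; case: (ltngtP x y) => H.
  - by case: (key _ _ H E).
  - by case: (key _ _ H (esym E)).
  - exact: val_inj.
have := leq_card Pv Hinj.
by rewrite card_ord card_ffun card_bool card_ord.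
Qed.
End Lower.

Section Final.
Local Open Scope R_scope.
Lemma INR_expn2 c : INR (2 ^ c)%N = 2 ^ c.
Proof.
elim: c => [|c IH] //=; rewrite expnS mult_INR IH /=; ring.
Qed.

Lemma log_bound (N c : nat) : (N.+1 <= 2 ^ c)%N -> log2 (INR N + 1) <= INR c.
Proof.
move=> H.
have H1 : INR N + 1 <= 2 ^ c by rewrite -S_INR -INR_expn2; apply: le_INR; apply/leP.
have Hl2 : 0 < ln 2 by have := ln_lt_2; lra.
have Hpos : 0 < INR N + 1 by have := pos_INR N; lra.
have H2 : ln (INR N + 1) <= ln (2 ^ c).
  case: (Rle_lt_or_eq_dec _ _ H1) => H3; last by rewrite H3; lra.
  by apply: Rlt_le; apply: ln_increasing.
rewrite ln_pow in H2; last lra.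
rewrite /log2 /Rdiv.
apply: (Rle_trans _ (INR c * ln 2 * / ln 2)).
  apply: Rmult_le_compat_r => //; apply: Rlt_le; apply: Rinv_0_lt_compat => //.
right; field; lra.
Qed.
End Final.

Theorem theorem1 (n : nat) :
  exists (T : finType) (e : rel T),
    #|T| = (2 * n)%N /\
    simple_graph e /\
    planar e /\
    pathwidth_le e 3 /\
    max_degree_le e 5 /\
    anagram_chromatic_ge e (log2 (INR n + 1)).
Proof.
exists ('I_n * bool)%type, (@ee n).
split; first exact: card_TT.
split; first exact: ee_simple.
split; first exact: ee_planar.
split; first exact: ee_pw.
split; first exact: ee_deg.
move=> c [f Hf]; apply: log_bound.
case: n f Hf => [|m] f Hf; first by rewrite expn_gt0.
exact: (lower Hf).
Qed.
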